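(* Let $X\subseteq\mathbb{C}^n$ be a complex analytic variety with coordinates $z_1,\dots,z_n$, $x\in X$, $M$ an $\mathcal{O}_{X,x}$-submodule of $\mathcal{O}_{X,x}^p$ with matrix of generators $[M]=[g_1\cdots g_r]$, and $k\in\mathbb{N}$. Let $[M_D]=\begin{bmatrix}[M] & 0\\ [M]' & [\tilde M]\end{bmatrix}$, where $[\tilde M]$ is the $p\times nr$ matrix with columns $(z_i-z_i')g_j'$, $i=1,\dots,n$, $j=1,\dots,r$. Let $\mathcal{I}_{2k}(M_D)$ be the ideal of $\mathcal{O}_{X\times X,(x,x)}$ generated by $\{\det(M_{IJ})\det(\tilde M_{KL}): I,J,K,L\text{ are }k\text{-indexes}\}$. Then $\mathcal{I}_{2k}(M_D)\subseteq I_\Delta^{k-1}\,I_2((I_k(M))_D)$.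
   Context: $\pi_1,\pi_2:X\times X\to X$ are projections; for an object $A$ on $X$, $A$ also denotes $A\circ\pi_1$ and $A'$ denotes $A\circ\pi_2$. The matrix $[M_D]$ above is a matrix of generators of $M_D$, the submodule of $\mathcal{O}_{X\times X,(x,x)}^{2p}$ generated by $h_D=(h\circ\pi_1,h\circ\pi_2)$, $h\in M$. For a matrix $A$ and $k$-indexes $I,J$, $A_{IJ}$ is the submatrix with rows $I$ and columns $J$. $I_\Delta$ is the ideal generated by $z_i-z_i'$, $i=1,\dots,n$. $I_k(M)$ is the ideal of $k\times k$ minors of $[M]$, $(I_k(M))_D\subseteq\mathcal{O}^2_{X\times X,(x,x)}$ is generated by $(f\circ\pi_1,f\circ\pi_2)$, $f\in I_k(M)$, and $I_2(\cdot)$ denotes the ideal of $2\times 2$ minors. *)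

(* Defs.v *)
From HB Require Import structures.
From mathcomp Require Import all_boot all_order all_algebra.
Set Implicit Arguments. Unset Strict Implicit. Unset Printing Implicit Defensive.
Import Order.TTheory GRing.Theory Num.Theory.
Local Open Scope ring_scope.

Definition ideal_gen (R : comNzRingType) (S : R -> Prop) : R -> Prop :=
  fun x => exists (m : nat) (c s : 'I_m -> R),
    (forall i, S (s i)) /\ x = \sum_(i < m) c i * s i.

Definition ideal_mul (R : comNzRingType) (I J : R -> Prop) : R -> Prop :=
  ideal_gen (fun x => exists a b, I a /\ J b /\ x = a * b).

Fixpoint ideal_exp (R : comNzRingType) (I : R -> Prop) (n : nat) : R -> Prop :=
  match n with
  | 0%N => fun _ => True
  | n'.+1 => ideal_mul (ideal_exp I n') I
  end.

Definition kindex (k m : nat) (f : 'I_k -> 'I_m) : Prop :=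
  forall a b : 'I_k, (a < b)%N -> (f a < f b)%N.

Definition minor_ideal (R : comNzRingType) (p r k : nat) (G : 'M[R]_(p, r)) :
  R -> Prop :=
  ideal_gen (fun x => exists (I : 'I_k -> 'I_p) (J : 'I_k -> 'I_r),
    kindex I /\ kindex J /\ x = \det (mxsub I J G)).

Definition module_gen2 (R : comNzRingType) (S : R * R -> Prop) : R * R -> Prop :=
  fun v => exists (m : nat) (c : 'I_m -> R) (s : 'I_m -> R * R),
    (forall i, S (s i)) /\
    v = (\sum_(i < m) c i * (s i).1, \sum_(i < m) c i * (s i).2).

Definition I2_mod (R : comNzRingType) (N : R * R -> Prop) : R -> Prop :=
  ideal_gen (fun x => exists u v, N u /\ N v /\ x = u.1 * v.2 - u.2 * v.1).

(* (J)_D for an ideal J of A: the submodule of B^2 generated by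
   (f o pi1, f o pi2), f in J, where p1, p2 are the pullbacks along pi1, pi2. *)
Definition ideal_D (A B : comNzRingType) (p1 p2 : A -> B) (J : A -> Prop) :
  B * B -> Prop :=
  module_gen2 (fun v => exists f, J f /\ v = (p1 f, p2 f)).

Definition I_Delta (A B : comNzRingType) (n : nat) (p1 p2 : A -> B)
  (z : 'I_n -> A) : B -> Prop :=
  ideal_gen (fun x => exists i, x = p1 (z i) - p2 (z i)).

(* [~M]: the p x (n r) matrix with columns (z_i - z_i') g_j', the column
   (i, j) sitting at index mxvec_index i j. *)
Definition Mtilde (A B : comNzRingType) (n p r : nat) (p1 p2 : A -> B)
  (z : 'I_n -> A) (G : 'M[A]_(p, r)) : 'M[B]_(p, n * r) :=
  \matrix_(a < p) mxvec (\matrix_(i < n, j < r) ((p1 (z i) - p2 (z i)) * p2 (G a j))).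

Definition I2k_MD (A B : comNzRingType) (n p r k : nat) (p1 p2 : A -> B)
  (z : 'I_n -> A) (G : 'M[A]_(p, r)) : B -> Prop :=
  ideal_gen (fun x => exists (I : 'I_k -> 'I_p) (J : 'I_k -> 'I_r)
                              (K : 'I_k -> 'I_p) (L : 'I_k -> 'I_(n * r)),
    kindex I /\ kindex J /\ kindex K /\ kindex L /\
    x = \det (mxsub I J (map_mx p1 G)) * \det (mxsub K L (Mtilde p1 p2 z G))).

(* Main.v *)
Require Import Defs.
From HB Require Import structures.
From mathcomp Require Import all_boot all_order all_algebra all_fingroup.
Import GRing.Theory.
Local Open Scope ring_scope.
From mathcomp Require Import ring.

Section Ideals.
Variable R : comNzRingType.
Implicit Types S : R -> Prop.

Lemma gen_in S x : S x -> ideal_gen S x.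
Proof. by move=> Sx; exists 1%N, (fun _ => 1), (fun _ => x); rewrite big_ord1 mul1r. Qed.

Lemma gen0 S : ideal_gen S 0.
Proof. by exists 0%N, (fun _ => 0), (fun _ => 0); split => [[]//|]; rewrite big_ord0. Qed.

Lemma genD S x y : ideal_gen S x -> ideal_gen S y -> ideal_gen S (x + y).
Proof.
move=> [m [c [s [Hs ->]]]] [m' [c' [s' [Hs' ->]]]].
exists (m + m')%N,
  (fun i => match split i with inl a => c a | inr b => c' b end),
  (fun i => match split i with inl a => s a | inr b => s' b end).
split => [i|]; first by case: (split i).
rewrite big_split_ord /=; congr (_ + _); apply: eq_bigr => i _.
  by rewrite -[lshift _ _]/(unsplit (inl i)) unsplitK.
by rewrite -[rshift _ _]/(unsplit (inr i)) unsplitK.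
Qed.

Lemma genM S a x : ideal_gen S x -> ideal_gen S (a * x).
Proof.
move=> [m [c [s [Hs ->]]]]; exists m, (fun i => a * c i), s; split => //.
by rewrite mulr_sumr; apply: eq_bigr => i _; rewrite mulrA.
Qed.

Lemma genN S x : ideal_gen S x -> ideal_gen S (- x).
Proof. by move=> H; rewrite -mulN1r; apply: genM. Qed.

Lemma genB S x y : ideal_gen S x -> ideal_gen S y -> ideal_gen S (x - y).
Proof. by move=> *; apply: genD => //; apply: genN. Qed.

Lemma exp_prod S m (F : 'I_m -> R) : (forall i, S (F i)) ->
  ideal_exp S m (\prod_(i < m) F i).
Proof.
elim: m F => [|m IH] F HF //=.
rewrite big_ord_recr /=; apply: gen_in; do 2 eexists; split; last split; last by [].
  by apply: IH. by [].
Qed.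
End Ideals.

Lemma minor_any (A : comNzRingType) p r k (G : 'M[A]_(p, r))
  (K : 'I_k -> 'I_p) (f : 'I_k -> 'I_r) :
  kindex K -> minor_ideal k G (\det (mxsub K f G)).
Proof.
move=> HK.
case: (boolP [exists a, exists b, (a != b) && (f a == f b)]) => [/existsP [a /existsP [b /andP [nab /eqP fab]]]|nex].
  rewrite -det_tr (determinant_alternate nab) //.
    by exists 0%N, (fun _ => 0), (fun _ => 0); split => [[]//|]; rewrite big_ord0.
  by move=> i; rewrite !mxE fab.
have inj : injective f.
  move=> a b fab; apply/eqP; apply: contraR nex => nab.
  by apply/existsP; exists a; apply/existsP; exists b; rewrite nab fab eqxx.
pose S := f @: [set: 'I_k].
have cardS : #|S| = k by rewrite card_imset // cardsT card_ord.
pose g (t : 'I_k) : 'I_r := enum_val (cast_ord (esym cardS) t).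
have fS t : f t \in S by apply: imset_f; rewrite inE.
pose s t := cast_ord cardS (enum_rank_in (fS t) (f t)).
have fg t : f t = g (s t) by rewrite /g /s cast_ordK enum_rankK_in.
have sinj : injective s by move=> a b sab; apply: inj; rewrite !fg sab.
pose sp := perm.perm sinj.
have -> : mxsub K f G = col_perm sp (mxsub K g G).
  by apply/matrixP => a t; rewrite !mxE perm.permE /= fg.
rewrite col_permE det_mulmx det_perm.
have ginc : kindex g.
  move=> a b ab.
  have inc_A : sorted ltn (map val (enum S)).
    rewrite -[enum _](eq_filter (mem_enum _)).
    rewrite -(eq_filter (mem_map val_inj _)) -filter_map.
    by rewrite (sorted_filter ltn_trans) // unlock val_ord_enum iota_ltn_sorted.
  have szS : size (map val (enum S)) = k by rewrite size_map -cardE.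
  have := sorted_ltn_nth ltn_trans 0%N inc_A.
  move=> /(_ a b); rewrite !inE szS !ltn_ord => /(_ isT isT ab).
  rewrite /g !(enum_val_nth (f a)) !(nth_map (f a)) ?szS -?cardE ?cardS ?ltn_ord //.
exists 1%N, (fun _ => (-1) ^+ perm.odd_perm (sp^-1)%g), (fun _ => \det (mxsub K g G)).
split; last by rewrite big_ord1 mulrC.
by move=> _; exists K, g.
Qed.

Definition ij n r (l : 'I_(n * r)) : 'I_n * 'I_r :=
  enum_val (cast_ord (esym (mxvec_cast n r)) l).

Arguments ij {n r}.

Lemma mxvec_ij (T : nmodType) n r (M : 'M[T]_(n, r)) l :
  mxvec M 0 l = M (ij l).1 (ij l).2.
Proof. by case/mxvec_indexP: l => i j; rewrite /ij /mxvec_index cast_ordK enum_rankK mxvecE. Qed.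

Lemma det_Mtilde (A B : comNzRingType) (p1 p2 : {rmorphism A -> B})
  n p r k (z : 'I_n -> A) (G : 'M[A]_(p, r)) (K : 'I_k -> 'I_p) (L : 'I_k -> 'I_(n * r)) :
  \det (mxsub K L (Mtilde p1 p2 z G)) =
  p2 (\det (mxsub K (fun t => (ij (L t)).2) G)) *
  \prod_(t < k) (p1 (z (ij (L t)).1) - p2 (z (ij (L t)).1)).
Proof.
have -> : mxsub K L (Mtilde p1 p2 z G) =
  map_mx p2 (mxsub K (fun t => (ij (L t)).2) G) *m
  diag_mx (\row_t (p1 (z (ij (L t)).1) - p2 (z (ij (L t)).1))).
  by apply/matrixP => a t; rewrite mul_mx_diag !mxE mxvec_ij mxE mulrC.
rewrite det_mulmx det_diag det_map_mx; congr (_ * _).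
by apply: eq_bigr => t _; rewrite mxE.
Qed.

Lemma I2_key (A B : comNzRingType) (p1 p2 : {rmorphism A -> B}) (J : A -> Prop)
  (HJ : forall a f, J f -> J (a * f)) z f1 f2 :
  J f1 -> J f2 -> I2_mod (ideal_D p1 p2 J) ((p1 z - p2 z) * p1 f1 * p2 f2).
Proof.
move=> J1 J2.
have inD f : J f -> ideal_D p1 p2 J (p1 f, p2 f).
  move=> Jf; exists 1%N, (fun _ => 1), (fun _ => (p1 f, p2 f)).
  by split => [_|]; [exists f | rewrite !big_ord1 !mul1r].
have -> : (p1 z - p2 z) * p1 f1 * p2 f2 =
   (p1 (z * f1) * p2 f2 - p2 (z * f1) * p1 f2) - p2 z * (p1 f1 * p2 f2 - p2 f1 * p1 f2).
  by rewrite !rmorphM /=; ring.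
apply: genB.
  apply: gen_in; exists (p1 (z * f1), p2 (z * f1)), (p1 f2, p2 f2).
  by split; [apply: inD; apply: HJ | split; [apply: inD|]].
by apply: genM; apply: gen_in; exists (p1 f1, p2 f1), (p1 f2, p2 f2); split; [apply: inD | split; [apply: inD|]].
Qed.

Theorem lemma3p4 (A B : comNzRingType) (p1 p2 : {rmorphism A -> B})
  (n p r k : nat) (z : 'I_n -> A) (G : 'M[A]_(p, r)) :
  (0 < k)%N ->
  forall x : B, I2k_MD k p1 p2 z G x ->
    ideal_mul (ideal_exp (I_Delta p1 p2 z) k.-1)
              (I2_mod (ideal_D p1 p2 (minor_ideal k G))) x.
Proof.
case: k => [//|k] _ x [m [c [s [Hs ->]]]].
exists m, c, s; split => // i.
have [I [J [K [L [HI [HJ [HK [HL ->]]]]]]]] := Hs i.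
rewrite det_Mtilde big_ord_recl /= -map_mxsub det_map_mx.
set d := fun t : 'I_k.+1 => _.
set P := \prod_(t < k) _.
exists P, ((p1 (z (ij (L ord0)).1) - p2 (z (ij (L ord0)).1)) * p1 (\det (mxsub I J G)) * p2 (\det (mxsub K d G))).
split.
  apply: (@exp_prod _ _ _ (fun t : 'I_k => p1 (z (ij (L (lift ord0 t))).1) - p2 (z (ij (L (lift ord0 t))).1))) => t; apply: gen_in; by exists (ij (L (lift ord0 t))).1.
split; last by rewrite /P; ring.
have Hid : forall a f, minor_ideal k.+1 G f -> minor_ideal k.+1 G (a * f) by move=> a f; apply: genM.
apply: I2_key => //; last exact: minor_any.
by apply: gen_in; exists I, J.
Qed.
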